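(* Let $\mathbf{H}$ be a finite commutative semihypergroup with states $e_1,\dots,e_n$ that is derived from a group. Then any two columns $a_{i,j}$ and $a_{k,l}$ ($1\le i,j,k,l\le n$) are rearrangements of each other, i.e. they have the same multiset of entries. In particular the cube $C=(a_{i,j}(k))_{i,j,k}$ has at most $n$ distinct entries.
   Context: A finite commutative semihypergroup $\mathbf{H}$ with $n$ states $e_1,\dots,e_n$ is given by a convolution $e_i*e_j=\sum_{k=1}^n a_{i,j}(k)e_k$ ($i,j=1,\dots,n$), extended bilinearly, where $a_{i,j}(k)\ge 0$, $\sum_{k=1}^n a_{i,j}(k)=1$ for all $i,j$, the convolution is associative and commutative ($a_{i,j}(k)=a_{j,i}(k)$). Let $a_{i,j}\in\mathbb{R}^n$ denote the column vector $(a_{i,j}(1),\dots,a_{i,j}(n))^T$; let $A_i$ be the $n\times n$ matrix with columns $a_{i,1},\dots,a_{i,n}$ and $B_i$ the matrix with columns $a_{1,i},\dots,a_{n,i}$. $\mathbf{H}$ is called derived from a group if it satisfies condition (A): the set $\{a_{i,j}: 1\le i,j\le n\}$ contains exactly $n$ distinct vectors, and for each $i$ the columns of $A_i$ are linearly independent and the columns of $B_i$ are linearly independent. *)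

(* Defs.v *)
From HB Require Import structures.
From mathcomp Require Import all_boot all_order all_algebra.
Set Implicit Arguments. Unset Strict Implicit. Unset Printing Implicit Defensive.
Import Order.TTheory GRing.Theory Num.Theory.
Local Open Scope ring_scope.

(* Structure constants: a i j k = a_{i,j}(k), i.e. e_i * e_j = sum_k a i j k e_k. *)

Definition acol (R : realFieldType) (n : nat) (a : 'I_n -> 'I_n -> 'I_n -> R)
  (i j : 'I_n) : 'cV[R]_n := \col_k a i j k.

Definition is_comm_semihypergroup (R : realFieldType) (n : nat)
  (a : 'I_n -> 'I_n -> 'I_n -> R) : Prop :=
  [/\ (forall i j k, 0 <= a i j k),
      (forall i j, \sum_(k < n) a i j k = 1),
      (forall i j k, a i j k = a j i k) &
      (* associativity: (e_i * e_j) * e_l = e_i * (e_j * e_l) *)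
      (forall i j l m,
         \sum_(k < n) a i j k * a k l m = \sum_(k < n) a j l k * a i k m)].

Definition Amat (R : realFieldType) (n : nat) (a : 'I_n -> 'I_n -> 'I_n -> R)
  (i : 'I_n) : 'M[R]_n := \matrix_(k < n, j < n) a i j k.
Definition Bmat (R : realFieldType) (n : nat) (a : 'I_n -> 'I_n -> 'I_n -> R)
  (i : 'I_n) : 'M[R]_n := \matrix_(k < n, j < n) a j i k.

Definition cols_independent (R : realFieldType) (n : nat) (M : 'M[R]_n) : bool :=
  row_free M^T.

Definition derived_from_group (R : realFieldType) (n : nat)
  (a : 'I_n -> 'I_n -> 'I_n -> R) : Prop :=
  [/\ size (undup [seq acol a ij.1 ij.2 | ij : 'I_n * 'I_n]) = n,
      (forall i, cols_independent (Amat a i)) &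
      (forall i, cols_independent (Bmat a i))].

(* Main.v *)
Require Import Defs.
From HB Require Import structures.
From mathcomp Require Import all_boot all_order all_algebra.
From mathcomp Require Import perm fingroup.
Import Order.TTheory GRing.Theory Num.Theory.
Local Open Scope ring_scope.

Lemma inj_mul (R : realFieldType) (n : nat) (M : 'M[R]_n) :
  cols_independent M -> forall x y : 'cV_n, M *m x = M *m y -> x = y.
Proof.
move=> /row_free_inj Hf x y Hxy; apply: trmx_inj; apply: Hf.
by rewrite /= -!trmx_mul Hxy.
Qed.

Arguments inj_mul {R n M}.

Lemma delta_inj (R : realFieldType) (n : nat) (j j' : 'I_n) :
  delta_mx j 0 = delta_mx j' 0 :> 'cV[R]_n -> j = j'.
Proof.
move=> /matrixP /(_ j 0); rewrite !mxE !eqxx /=.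
by case: eqVneq => // _ /eqP; rewrite oner_eq0.
Qed.

Lemma colA (R : realFieldType) (n : nat) (a : 'I_n -> 'I_n -> 'I_n -> R) i j :
  Amat a i *m delta_mx j 0 = acol a i j.
Proof. by rewrite -colE; apply/matrixP => k z; rewrite !mxE. Qed.

Lemma colB (R : realFieldType) (n : nat) (a : 'I_n -> 'I_n -> 'I_n -> R) i j :
  Bmat a i *m delta_mx j 0 = acol a j i.
Proof. by rewrite -colE; apply/matrixP => k z; rewrite !mxE. Qed.

Lemma perm_enum_map (n : nat) (f : {perm 'I_n}) :
  perm_eq [seq f m | m <- enum 'I_n] (enum 'I_n).
Proof.
apply: uniq_perm; first by rewrite map_inj_uniq ?enum_uniq //; apply: perm_inj.
  exact: enum_uniq.
move=> x; rewrite mem_enum; apply/mapP; exists (f^-1 x)%g; first by rewrite mem_enum.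
by rewrite permKV.
Qed.

Theorem corollary1 (R : realFieldType) (n : nat)
  (a : 'I_n -> 'I_n -> 'I_n -> R) :
  is_comm_semihypergroup a -> derived_from_group a ->
  (forall i j k l : 'I_n,
     perm_eq [seq a i j m | m <- enum 'I_n] [seq a k l m | m <- enum 'I_n]) /\
  (size (undup [seq a ijk.1.1 ijk.1.2 ijk.2 | ijk : ('I_n * 'I_n) * 'I_n]) <= n)%N.
Proof.
move=> [_ _ _ Hass] [Hsz HA HB].
have injA i : injective (acol a i).
  move=> j j' E; apply: (@delta_inj R); apply: (inj_mul (HA i)).
  by rewrite !colA E.
have injB i : injective (acol a ^~ i).
  move=> j j' E; apply: (@delta_inj R); apply: (inj_mul (HB i)).
  by rewrite !colB E.
set S := undup _ in Hsz.
have surjA i c : c \in S -> exists j, acol a i j = c.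
  move=> cS.
  have U : uniq [seq acol a i j | j <- enum 'I_n].
    by rewrite map_inj_uniq ?enum_uniq //; exact: injA.
  have Sub : {subset [seq acol a i j | j <- enum 'I_n] <= S}.
    move=> c' /mapP [j _ ->]; rewrite mem_undup.
    by apply/mapP; exists (i, j) => //; rewrite mem_enum.
  have Le : (size S <= size [seq acol a i j | j <- enum 'I_n])%N.
    by rewrite size_map size_enum_ord Hsz.
  have [_ E] := uniq_min_size U Sub Le.
  move: cS; rewrite -E => /mapP [j _ ->]; by exists j.
have inS i j : acol a i j \in S.
  by rewrite mem_undup; apply/mapP; exists (i, j) => //; rewrite mem_enum.
have key : forall i j l, perm_eq [seq a i j m | m <- enum 'I_n]
                              [seq a j l m | m <- enum 'I_n].
  move=> i j l.
  have Hex : forall k, exists p, acol a k l = acol a i p.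
    by move=> k; have [p Hp] := surjA i _ (inS k l); exists p.
  have [fk Hf] := fin_all_exists Hex.
  have [gk Hg] : exists g : 'I_n -> 'I_n, forall k, acol a i k = acol a i (g k).
    by exists id.
  have fI : injective fk by move=> x y E; apply: (injB l); rewrite !Hf E.
  set f := perm fI.
  have E : \col_p a i j (f^-1 p)%g = \col_p a j l p :> 'cV[R]_n.
    apply: (inj_mul (HA i)); apply/matrixP => m z; rewrite !mxE.
    have Hk k : a k l m = a i (f k) m.
      by have := congr1 (fun v : 'cV_n => v m 0) (Hf k); rewrite !mxE permE.
    have := Hass i j l m.
    rewrite (eq_bigr (fun k => a i j k * a i (f k) m)); last by move=> k _; rewrite Hk.
    move=> H.
    under eq_bigr => k _ do rewrite !mxE.
    under [RHS]eq_bigr => k _ do rewrite !mxE mulrC.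
    rewrite -H {H}.
    rewrite [LHS](reindex_inj (@perm_inj _ f)) /=.
    by apply: eq_bigr => k _; rewrite permK mulrC.
  have P1 : perm_eq [seq a i j m | m <- enum 'I_n]
                    [seq a i j (f^-1 m)%g | m <- enum 'I_n].
    have -> : [seq a i j (f^-1 m)%g | m <- enum 'I_n] =
       map (a i j) (map (fun m => (f^-1 m)%g) (enum 'I_n)).
      by elim: (enum 'I_n) => //= x s ->.
    rewrite perm_sym.
    apply: (perm_map (a i j)). exact: perm_enum_map.
  apply: perm_trans P1 _.
  have -> : [seq a i j (f^-1 m)%g | m <- enum 'I_n] = [seq a j l m | m <- enum 'I_n].
    apply: eq_map => p; have := congr1 (fun v : 'cV_n => v p 0) E.
    by rewrite !mxE.
  exact: perm_refl.
split.
  by move=> i j k l; apply: perm_trans (key i j k) _; apply: key.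
have [i0 _|none] := pickP (fun _ : 'I_n => true).
  have Sub : {subset undup [seq a ijk.1.1 ijk.1.2 ijk.2 | ijk : ('I_n * 'I_n) * 'I_n]
              <= [seq a i0 i0 m | m <- enum 'I_n]}.
    move=> y; rewrite mem_undup => /mapP [[[i j] k] _ ->] /=.
    have Hji : perm_eq [seq a i j m | m <- enum 'I_n] [seq a i0 i0 m | m <- enum 'I_n].
      by apply: perm_trans (key i j i0) _; apply: key.
    by rewrite -(perm_mem Hji); apply/mapP; exists k; rewrite ?mem_enum.
  by have := uniq_leq_size (undup_uniq _) Sub; rewrite size_map size_enum_ord.
have Sub : {subset undup [seq a ijk.1.1 ijk.1.2 ijk.2 | ijk : ('I_n * 'I_n) * 'I_n]
              <= [::]}.
  by move=> y; rewrite mem_undup => /mapP [[[i j] k] _ _]; have := none i.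
by have := uniq_leq_size (undup_uniq _) Sub; rewrite leqn0 => /eqP ->.
Qed.
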